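(* Let $p$ be a prime, $q=p^r$, $m,n\ge1$, and $0\le l\le r-1$. Let $\mathscr{C}\subseteq\mathrm{GF}(q^m)^n$ be a scalable code. Then $\mathrm{Tr}(\mathscr{C})$ is self-orthogonal w.r.t. the Hermitian-type product $h_l(x,y)=\sum_{i=1}^n x_iy_i^{p^l}$ on $\mathrm{GF}(q)^n$ if and only if $$\sum_{i=1}^n x_iy_i^{p^lq^k}=0$$ for all $x=(x_1,\ldots,x_n),y=(y_1,\ldots,y_n)\in\mathscr{C}$ and all $0\le k\le m-1$; i.e., if and only if $\mathscr{C}$ is self-orthogonal w.r.t. each of the forms $f_{kl}(x,y)=\sum_{i=1}^n x_iy_i^{p^lq^k}$, $0\le k\le m-1$.
   Context: $\mathrm{Tr}:\mathrm{GF}(q^m)\to\mathrm{GF}(q)$, $\mathrm{Tr}(a)=\sum_{i=0}^{m-1}a^{q^i}$. A code $\mathscr{C}\subseteq\mathrm{GF}(q^m)^n$ is scalable if $x\in\mathscr{C}\Rightarrow\alpha x\in\mathscr{C}$ for all $\alpha\in\mathrm{GF}(q^m)$. $\mathrm{Tr}(\mathscr{C})=\{(\mathrm{Tr}(x_1),\ldots,\mathrm{Tr}(x_n)):x\in\mathscr{C}\}$. A code $D$ is self-orthogonal w.r.t. a form $g$ if $g(x,y)=0$ for all $x,y\in D$. *)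

(* Defs.v *)
From HB Require Import structures.
From mathcomp Require Import all_boot all_order all_algebra all_field.
Set Implicit Arguments. Unset Strict Implicit. Unset Printing Implicit Defensive.
Import GRing.Theory.
Local Open Scope ring_scope.

(* L plays the role of GF(q^m); GF(q) is its unique subfield of order q,
   i.e. the set of x with x^q = x. *)

Definition Tr {L : finFieldType} (q m : nat) (a : L) : L :=
  \sum_(i < m) a ^+ (q ^ i).

Definition scalable_code {L : finFieldType} {n : nat} (C : {set 'rV[L]_n}) : Prop :=
  forall (alpha : L) (x : 'rV[L]_n), x \in C -> alpha *: x \in C.

Definition TrCode {L : finFieldType} (q m : nat) {n : nat}
  (C : {set 'rV[L]_n}) : {set 'rV[L]_n} :=
  [set map_mx (Tr q m) x | x in C].

Definition powform {L : finFieldType} {n : nat} (e : nat) (x y : 'rV[L]_n) : L :=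
  \sum_(i < n) x 0 i * (y 0 i) ^+ e.

Definition self_orth {L : finFieldType} {n : nat}
  (g : 'rV[L]_n -> 'rV[L]_n -> L) (D : {set 'rV[L]_n}) : Prop :=
  forall x y, x \in D -> y \in D -> g x y = 0.

(* Main.v *)
Require Import Defs.
From HB Require Import structures.
From mathcomp Require Import all_boot all_order all_algebra all_field.
From mathcomp Require Import zify.
Import GRing.Theory.
Local Open Scope ring_scope.

Lemma poly_vanish (L : finFieldType) (m : nat) (e : 'I_m -> nat) (c : 'I_m -> L) :
  injective e -> (forall j, e j < #|L|)%N ->
  (forall b : L, \sum_(j < m) c j * b ^+ e j = 0) -> forall j, c j = 0.
Proof.
move=> einj elt H j.
pose P : {poly L} := \sum_(i < m) c i *: 'X^(e i).
have PE b : P.[b] = \sum_(i < m) c i * b ^+ e i.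
  by rewrite /P horner_sum; apply: eq_bigr => i _; rewrite hornerZ hornerXn.
have P0 : P = 0.
  apply/eqP; apply/negPn/negP => Pn0.
  have := max_poly_roots Pn0 (rs := enum L).
  rewrite enum_uniq -cardE.
  have -> : all (root P) (enum L) by apply/allP => b _; rewrite /root PE H.
  move=> /(_ isT isT).
  have : (size P <= #|L|)%N.
    rewrite /P; apply: (leq_trans (size_sum _ _ _)).
    apply/bigmax_leqP => i _.
    apply: (leq_trans (size_scale_leq _ _)).
    by rewrite size_polyXn.
  move=> h1 h2; have := leq_trans h2 h1; by rewrite ltnn.
have := congr1 (fun q : {poly L} => q`_(e j)) P0.
rewrite coef0 /P coef_sum (bigD1 j) //= coefZ coefXn eqxx mulr1 big1 ?addr0 //.
move=> i ij; rewrite coefZ coefXn.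
case: eqP => [/einj eji|]; last by rewrite mulr0.
by rewrite eji eqxx in ij.
Qed.

Section S.
Variables (L : finFieldType) (p : nat) (chp : p \in [pchar L]).

Lemma frobD k (a b : L) : (a + b) ^+ (p ^ k) = a ^+ (p ^ k) + b ^+ (p ^ k).
Proof.
apply: exprDn_pchar.
rewrite (eq_pnat _ (pcharf_eq chp)) pnatX pnat_id ?orbT //.
exact: pcharf_prime chp.
Qed.

Lemma frob0 k : (0 : L) ^+ (p ^ k) = 0.
Proof.
have p0 : (0 < p ^ k)%N by rewrite expn_gt0 prime_gt0 // (pcharf_prime chp).
by rewrite expr0n eqn0Ngt p0.
Qed.

Lemma frob_sum k I (r : seq I) (P : pred I) (F : I -> L) :
  (\sum_(i <- r | P i) F i) ^+ (p ^ k) = \sum_(i <- r | P i) F i ^+ (p ^ k).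
Proof. exact: (big_morph (fun a : L => a ^+ (p ^ k)) (frobD k) (frob0 k)). Qed.

Variables (r m : nat) (hQ : #|L| = ((p ^ r) ^ m)%N) (m0 : (0 < m)%N).

Lemma expQ (a : L) : a ^+ ((p ^ r) ^ m)%N = a.
Proof. by rewrite -hQ expf_card. Qed.

Lemma Tr_q (w : L) : Tr (p ^ r)%N m w ^+ (p ^ r) = Tr (p ^ r)%N m w.
Proof.
rewrite /Tr frob_sum.
case: m m0 hQ => // m' _ hQ'.
rewrite big_ord_recr big_ord_recl /= -exprM -expnSr.
have -> : ((p ^ r) ^ m'.+1)%N = #|L| by rewrite hQ'.
rewrite expf_card addrC; congr (_ + _); apply: eq_bigr => i _.
by rewrite -exprM -expnSr.
Qed.

Lemma Tr_qj (w : L) j : Tr (p ^ r)%N m w ^+ ((p ^ r) ^ j)%N = Tr (p ^ r)%N m w.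
Proof.
elim: j => [|j IH]; first by rewrite expn0 expr1.
by rewrite expnSr exprM IH Tr_q.
Qed.

End S.

Theorem theorem7 (p r m n l : nat) (L : finFieldType) (C : {set 'rV[L]_n}) :
  prime p -> (0 < r)%N -> (0 < m)%N -> (0 < n)%N -> (l < r)%N ->
  p \in [pchar L] -> #|L| = ((p ^ r) ^ m)%N ->
  scalable_code C ->
  (self_orth (powform (p ^ l)) (TrCode (p ^ r) m C) <->
   (forall k : nat, (k < m)%N ->
      self_orth (powform (p ^ l * (p ^ r) ^ k)) C)).
Proof.
move=> pp r0 m0 n0 lr chp hQ sC.
set q := (p ^ r)%N.
have p1 : (1 < p)%N by exact: prime_gt1.
have q1 : (1 < q)%N by rewrite /q -{1}(expn0 p) ltn_exp2l.
have hq : forall j, (q ^ j = p ^ (r * j))%N by move=> j; rewrite expnM.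
split.
- move=> H k km x y Hx Hy.
  have fs : forall j (F : 'I_n -> L), (\sum_(i < n) F i) ^+ (q ^ j) = \sum_(i < n) F i ^+ (q ^ j).
    by move=> j F; rewrite hq (@frob_sum _ _ chp).
  have hA : forall b : L, \sum_(i < n) x 0 i * Tr q m (b * y 0 i) ^+ (p ^ l) = 0.
    move=> b.
    set z := \sum_(i < n) _.
    pose j0 : 'I_m := Ordinal m0.
    have := @poly_vanish L m (fun j : 'I_m => q ^ j)%N (fun j => z ^+ (q ^ j)) _ _ _ j0.
    rewrite /= expn0 expr1; apply.
    - by move=> a b' /= /(expnI q1) /val_inj.
    - by move=> j; rewrite hQ ltn_exp2l.
    move=> a.
    have E : Tr q m (a * z) = powform (p ^ l) (map_mx (Tr q m) (a *: x)) (map_mx (Tr q m) (b *: y)).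
      rewrite /powform.
      under [RHS]eq_bigr => i _ do rewrite !mxE.
      rewrite {1}/Tr /z. rewrite mulr_sumr.
      under [LHS]eq_bigr => j _ do rewrite fs.
      rewrite exchange_big /=; apply: eq_bigr => i _.
      rewrite /Tr mulr_suml; apply: eq_bigr => j _.
      by rewrite mulrA exprMn exprAC (@Tr_qj _ _ chp _ _ hQ m0).
    rewrite -[RHS](H (map_mx (Tr q m) (a *: x)) (map_mx (Tr q m) (b *: y))); last 2 first.
    + by apply/imsetP; exists (a *: x) => //; apply: sC.
    + by apply/imsetP; exists (b *: y) => //; apply: sC.
    rewrite -E /Tr; apply: eq_bigr => j _.
    by rewrite exprMn mulrC.
  pose j1 : 'I_m := Ordinal km.
  have := @poly_vanish L m (fun j : 'I_m => p ^ l * q ^ j)%N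
    (fun j : 'I_m => powform (p ^ l * q ^ j) x y) _ _ _ j1.
  apply.
  - move=> a b /= /eqP; rewrite eqn_pmul2l ?expn_gt0 ?prime_gt0 //.
    by move=> /eqP /(expnI q1) /val_inj.
  - move=> j; rewrite hQ.
    have h1 : (p ^ l < q)%N by rewrite ltn_exp2l.
    have h2 : (p ^ l * q ^ j < q * q ^ j)%N by rewrite ltn_pmul2r // expn_gt0 (ltnW q1).
    apply: (leq_trans h2); rewrite -expnS leq_pexp2l ?(ltnW q1) //.
  - move=> b; apply: (eq_trans _ (hA b)); rewrite /powform.
    under eq_bigr => j _ do rewrite mulr_suml.
    under [RHS]eq_bigr => i _ do rewrite /Tr (@frob_sum _ _ chp) mulr_sumr.
    rewrite [RHS]exchange_big;  apply: eq_bigr => j _; apply: eq_bigr => i _.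
    rewrite -exprM exprMn (mulnC (q ^ j)%N).
    by rewrite [RHS]mulrA mulrAC.
- move=> H u v /imsetP [x Hx ->] /imsetP [y Hy ->].
  have key : forall j j' : 'I_m,
      \sum_(i < n) x 0 i ^+ (q ^ j') * (y 0 i ^+ (q ^ j)) ^+ (p ^ l) = 0.
    move=> j j'.
    pose k := if (j' <= j)%N then (j - j')%N else (j + m - j')%N.
    have km : (k < m)%N.
      rewrite /k; have := ltn_ord j; have := ltn_ord j'; case: ifP => h; lia.
    have := H k km x y Hx Hy.
    rewrite /powform => /(congr1 (fun a => a ^+ (q ^ j'))).
    rewrite /= (hq j') (@frob0 _ _ chp) (@frob_sum _ _ chp) -(hq j') => E; apply: (eq_trans _ E).
    apply: eq_bigr => i _; rewrite exprMn; congr (_ * _).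
    rewrite -!exprM.
    have E2 : (p^l * q^k * q^j')%N = if (j' <= j)%N then (q^j * p^l)%N
                                      else (q^j * p^l * q^m)%N.
      rewrite -mulnA -expnD /k; case: ifP => h.
        by rewrite subnK // mulnC.
      have := ltn_ord j; have := ltn_ord j' => ??.
      rewrite subnK; last by lia.
      by rewrite expnD mulnA (mulnC (p^l)%N).
    rewrite E2; case: ifP => _ //.
    by rewrite [in RHS]exprM (@expQ _ _ _ _ hQ) exprM.
  rewrite /powform.
  under eq_bigr => i _ do rewrite !mxE /Tr frob_sum // mulr_suml.
  rewrite exchange_big /=; apply: big1 => j' _.
  under eq_bigr => i _ do rewrite mulr_sumr.
  rewrite exchange_big; apply: big1 => j _; exact: key.
Qed.
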